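(* Let $(\Sigma,\operatorname{dist})$ be a metric space and let $x_0\in\Sigma$ have a compact neighborhood. Put $X=\mathbb{R}\times\Sigma$, $p=(0,x_0)$ and $\pi_1(s,x)=s$. Let $W\colon X\to\mathbb{R}$ be continuous with $W(p)=0$, $W(q)>0$ for all $q\neq p$, and $\int_{-1}^0\frac{ds}{W(s,x_0)}=\int_0^1\frac{ds}{W(s,x_0)}=\infty$. Then there is a unique partial flow $\phi$ on $X$ with horizontal trajectories, having a fake singularity at $p$, and satisfying $\dot\pi_1=W$, i.e. $\frac{d}{dt}\big|_{t=0}\pi_1(\phi_t(q))=W(q)$ for all $q\in X$.
   Context: A partial flow on a metric space $X$ is a continuous map $\phi\colon\Gamma\to X$ on an open set $\Gamma\subset\mathbb{R}\times X$. Here $\Gamma_x=\{t:(t,x)\in\Gamma\}$ is a connected set containing $0$, $\Gamma_{\phi_t(x)}=\Gamma_x-t$, $\phi_0=\mathrm{id}$, and $\phi_s\phi_t=\phi_{s+t}$ where defined. A partial flow on $\mathbb{R}\times\Sigma$ has horizontal trajectories if every trajectory is contained in a set of the form $\mathbb{R}\times\{x\}$. A point $p$ is an isolated point if $\{p\}$ is an isolated set, i.e. it has a compact neighborhood $N$ such that $\phi_{\Gamma_x}(x)\subseteq N$ implies $x=p$. An isolated point $p$ is a fake singularity if there are points $x_s,x_u\neq p$ such that: (1) every $x\neq p$ with $\phi_t(x)\to p$ as $t\to+\infty$ lies on the trajectory of $x_s$; (2) every $x\neq p$ with $\phi_t(x)\to p$ as $t\to-\infty$ lies on the trajectory of $x_u$.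 *)

(* Defs.v *)
From Stdlib Require Import Reals List.
Open Scope R_scope.

Definition is_metric {T : Type} (d : T -> T -> R) : Prop :=
  (forall x y, 0 <= d x y) /\ (forall x y, d x y = 0 <-> x = y) /\
  (forall x y, d x y = d y x) /\ (forall x y z, d x z <= d x y + d y z).

Definition is_open {T : Type} (d : T -> T -> R) (U : T -> Prop) : Prop :=
  forall x, U x -> exists r, 0 < r /\ forall y, d x y < r -> U y.

Definition is_nbhd {T : Type} (d : T -> T -> R) (N : T -> Prop) (x : T) : Prop :=
  exists U, is_open d U /\ U x /\ forall y, U y -> N y.

Definition is_compact {T : Type} (d : T -> T -> R) (K : T -> Prop) : Prop :=
  forall (I : Type) (O : I -> T -> Prop),
    (forall i, is_open d (O i)) ->
    (forall x, K x -> exists i, O i x) ->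
    exists l : list I, forall x, K x -> exists i, In i l /\ O i x.

(** Product (max) metric, inducing the product topology. *)
Definition prod_dist {A B : Type} (dA : A -> A -> R) (dB : B -> B -> R)
  (u v : A * B) : R := Rmax (dA (fst u) (fst v)) (dB (snd u) (snd v)).

Definition absdist (a b : R) : R := Rabs (a - b).

Definition is_continuous_on {A B : Type} (dA : A -> A -> R) (dB : B -> B -> R)
  (D : A -> Prop) (f : A -> B) : Prop :=
  forall a, D a -> forall eps, 0 < eps -> exists delta, 0 < delta /\
    forall a', D a' -> dA a a' < delta -> dB (f a) (f a') < eps.

(** * Partial flows on a metric space (T, dT).
    The domain Gamma ⊂ R × T is [G : R -> T -> Prop] ([G t x] means (t,x) ∈ Gamma);
    the flow is [phi : R -> T -> T], only meaningful on Gamma. *)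
Definition partial_flow {T : Type} (dT : T -> T -> R)
  (G : R -> T -> Prop) (phi : R -> T -> T) : Prop :=
  is_open (prod_dist absdist dT) (fun u => G (fst u) (snd u)) /\
  is_continuous_on (prod_dist absdist dT) dT (fun u => G (fst u) (snd u))
    (fun u => phi (fst u) (snd u)) /\
  (forall x, G 0 x) /\
  (* Gamma_x is connected (an interval, as it contains 0) *)
  (forall x t s, G t x -> (0 <= s <= t \/ t <= s <= 0) -> G s x) /\
  (forall x t, G t x -> forall s, G s (phi t x) <-> G (s + t) x) /\
  (forall x, phi 0 x = x) /\
  (forall x t s, G t x -> G s (phi t x) -> phi s (phi t x) = phi (s + t) x).

Definition on_trajectory {T : Type} (G : R -> T -> Prop) (phi : R -> T -> T)
  (x y : T) : Prop := exists t, G t x /\ phi t x = y.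

Definition tends_fwd {T : Type} (dT : T -> T -> R) (G : R -> T -> Prop)
  (phi : R -> T -> T) (x p : T) : Prop :=
  (forall t, 0 <= t -> G t x) /\
  forall eps, 0 < eps -> exists T0, forall t, T0 <= t -> dT (phi t x) p < eps.

Definition tends_bwd {T : Type} (dT : T -> T -> R) (G : R -> T -> Prop)
  (phi : R -> T -> T) (x p : T) : Prop :=
  (forall t, t <= 0 -> G t x) /\
  forall eps, 0 < eps -> exists T0, forall t, t <= T0 -> dT (phi t x) p < eps.

Definition isolated_point {T : Type} (dT : T -> T -> R) (G : R -> T -> Prop)
  (phi : R -> T -> T) (p : T) : Prop :=
  exists N, is_compact dT N /\ is_nbhd dT N p /\
    forall x, (forall t, G t x -> N (phi t x)) -> x = p.

Definition fake_singularity {T : Type} (dT : T -> T -> R) (G : R -> T -> Prop)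
  (phi : R -> T -> T) (p : T) : Prop :=
  isolated_point dT G phi p /\
  exists xs xu, xs <> p /\ xu <> p /\
    (forall x, x <> p -> tends_fwd dT G phi x p -> on_trajectory G phi xs x) /\
    (forall x, x <> p -> tends_bwd dT G phi x p -> on_trajectory G phi xu x).

Definition Xdist {S : Type} (d : S -> S -> R) : R * S -> R * S -> R :=
  prod_dist absdist d.

Definition horizontal {S : Type} (G : R -> R * S -> Prop)
  (phi : R -> R * S -> R * S) : Prop :=
  forall t q, G t q -> snd (phi t q) = snd q.

Definition good_flow {S : Type} (d : S -> S -> R) (x0 : S) (W : R * S -> R)
  (G : R -> R * S -> Prop) (phi : R -> R * S -> R * S) : Prop :=
  partial_flow (Xdist d) G phi /\
  horizontal G phi /\
  fake_singularity (Xdist d) G phi (0, x0) /\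
  (forall q, derivable_pt_lim (fun t => fst (phi t q)) 0 (W q)).

(* Main.v *)
Require Import Defs.
From Stdlib Require Import Reals List Lra Classical ClassicalEpsilon Ranalysis5.
From Coquelicot Require Import Coquelicot.
Open Scope R_scope.


Lemma RI c d (A : R -> Prop) : c <= d -> (forall z, z < c -> A z) ->
  (forall x, c <= x <= d -> exists rho, 0 < rho /\ forall y0, x - rho < y0 -> A y0 -> forall z, z < x + rho -> A z) ->
  A d.
Proof.
  intros hcd hbase hloc.
  set (E := fun x => x <= d /\ A x).
  assert (hb : bound E) by (exists d; intros x [hx _]; auto).
  assert (hne : exists x, E x) by (exists (c - 1); split; [lra| apply hbase; lra]).
  destruct (completeness E hb hne) as [m [hub hlub]].
  assert (hmd : m <= d) by (apply hlub; intros x [hx _]; auto).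
  assert (hmc : c <= m).
  { destruct (Rle_dec c m) as [h|h]; auto. exfalso.
    assert (E ((m + c)/2)) by (split; [lra| apply hbase; lra]). apply hub in H. lra. }
  destruct (hloc m (conj hmc hmd)) as [rho [hr hA]].
  destruct (classic (exists y0, E y0 /\ m - rho < y0)) as [[y0 [[_ hy0] hy1]]|hn].
  - assert (hall : forall z, z < m + rho -> A z) by (apply (hA y0); auto).
    destruct (Rle_dec d m) as [h|h].
    + apply hall; lra.
    + exfalso. assert (E (Rmin d (m + rho/2))).
      { split. apply Rmin_l. apply hall. unfold Rmin; destruct (Rle_dec d (m + rho/2)); lra. }
      apply hub in H. unfold Rmin in H; destruct (Rle_dec d (m + rho/2)); lra.
  - exfalso. assert (m <= m - rho).
    { apply hlub. intros x hx. destruct (Rle_dec x (m - rho)) as [h|h]; auto.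
      exfalso; apply hn; exists x; split; auto; lra. }
    lra.
Qed.
Section Flow.
Variable S : Type.
Variable d : S -> S -> R.
Variable x0 : S.
Variable W : R * S -> R.
Hypothesis Hd : is_metric d.
Hypothesis HW : is_continuous_on (Xdist d) absdist (fun _ => True) W.
Hypothesis HWp : W (0, x0) = 0.
Hypothesis HWpos : forall q, q <> (0, x0) -> 0 < W q.

Lemma d_refl y : d y y = 0.
Proof. destruct Hd as [_ [H _]]. apply H; auto. Qed.
Lemma d_pos y z : 0 <= d y z.
Proof. destruct Hd as [H _]; auto. Qed.
Lemma d_sym y z : d y z = d z y.
Proof. destruct Hd as [_ [_ [H _]]]; auto. Qed.
Lemma d_tri y z w : d y w <= d y z + d z w.
Proof. destruct Hd as [_ [_ [_ H]]]; auto. Qed.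
Lemma d_eq0 y z : d y z = 0 -> y = z.
Proof. destruct Hd as [_ [H _]]. apply H. Qed.

Lemma W_nonneg q : 0 <= W q.
Proof. destruct (classic (q = (0,x0))) as [->|h]. lra. left; auto. Qed.

Lemma Wc u y eps : 0 < eps -> exists del, 0 < del /\ forall u' y',
  Rabs (u - u') < del -> d y y' < del -> Rabs (W (u,y) - W (u',y')) < eps.
Proof.
  intros he. destruct (HW (u,y) I eps he) as [del [hd H]].
  exists del; split; auto. intros u' y' h1 h2.
  apply (H (u',y') I). unfold Xdist, prod_dist; simpl. apply Rmax_lub_lt; auto.
Qed.

Lemma Wcu u y : continuity_pt (fun v => W (v, y)) u.
Proof.
  intros eps he. destruct (Wc u y eps he) as [del [hd H]].
  exists del; split; auto. intros v [_ hv]. simpl in *. unfold R_dist in *.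
  rewrite Rabs_minus_sym. apply H. rewrite Rabs_minus_sym; auto. rewrite d_refl; auto.
Qed.

Definition g (y : S) (u : R) : R := / W (u, y).
Definition T (y : S) (a b : R) : R := RInt (g y) a b.
Definition ok (y : S) (a b : R) : Prop := y <> x0 \/ (0 < a /\ 0 < b) \/ (a < 0 /\ b < 0).
Definition pos (y : S) (a b : R) : Prop := forall u, Rmin a b <= u <= Rmax a b -> 0 < W (u, y).

Lemma gcont y u : 0 < W (u,y) -> continuity_pt (g y) u.
Proof.
  intros h. unfold g. apply (continuity_pt_inv (fun v => W (v,y))). apply Wcu. lra.
Qed.

Lemma gcontC y u : 0 < W (u,y) -> continuous (g y) u.
Proof. intros h. apply continuity_pt_filterlim. apply gcont; auto. Qed.

Lemma ok_pos y a b : ok y a b -> pos y a b.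
Proof.
  intros h u hu. apply HWpos. intros e. injection e; intros e1 e2. subst.
  destruct h as [h|[h|h]]. now apply h.
  - destruct hu. unfold Rmin, Rmax in *. destruct (Rle_dec a b); lra.
  - destruct hu. unfold Rmin, Rmax in *. destruct (Rle_dec a b); lra.
Qed.

Lemma ok_sym y a b : ok y a b -> ok y b a.
Proof. unfold ok; intuition. Qed.
Lemma ok_trans y a b c : ok y a b -> ok y b c -> ok y a c.
Proof. unfold ok; intuition lra. Qed.
Lemma ok_l y a b : ok y a b -> ok y a a.
Proof. unfold ok; intuition lra. Qed.
Lemma ok_btw y a b u : ok y a b -> Rmin a b <= u <= Rmax a b -> ok y a u.
Proof. unfold ok, Rmin, Rmax; destruct (Rle_dec a b); intuition lra. Qed.

Lemma pos_sym y a b : pos y a b -> pos y b a.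
Proof. unfold pos; intros h u hu. apply h. rewrite Rmin_comm, Rmax_comm; auto. Qed.

Lemma pos_trans y a b c : pos y a b -> pos y b c -> pos y a c.
Proof.
  unfold pos; intros h1 h2 u hu.
  destruct (Rle_dec (Rmin a b) u); destruct (Rle_dec u (Rmax a b)).
  apply h1; lra. all: apply h2; unfold Rmin, Rmax in *;
  destruct (Rle_dec a b), (Rle_dec b c), (Rle_dec a c); lra.
Qed.

Lemma pos_sub y a b u v : pos y a b -> Rmin a b <= u <= Rmax a b -> Rmin a b <= v <= Rmax a b -> pos y u v.
Proof.
  unfold pos; intros h hu hv z hz. apply h.
  unfold Rmin, Rmax in *; destruct (Rle_dec a b), (Rle_dec u v); lra.
Qed.

Lemma exT y a b : pos y a b -> ex_RInt (g y) a b.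
Proof. intros h. apply (@ex_RInt_continuous R_CompleteNormedModule). intros z hz. apply gcontC, h; auto. Qed.

Lemma T_aa y a : T y a a = 0.
Proof. unfold T. rewrite RInt_point. reflexivity. Qed.

Lemma chasles y a b c : pos y a b -> pos y b c -> T y a b + T y b c = T y a c.
Proof. intros h1 h2. unfold T. apply (RInt_Chasles (g y)); apply exT; auto. Qed.

Lemma T_swap y a b : pos y a b -> T y b a = - T y a b.
Proof. intros h. pose proof (chasles y a b a h (pos_sym _ _ _ h)). rewrite T_aa in H. lra. Qed.

Lemma T_pos y a b : a < b -> pos y a b -> 0 < T y a b.
Proof.
  intros hab h. unfold T.
  replace 0 with (RInt (fun _ => 0) a b).
  2:{ rewrite RInt_const. unfold scal; simpl; unfold mult; simpl. ring. }
  apply RInt_lt; auto.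
  - intros x hx. apply gcontC, h. unfold Rmin, Rmax; destruct (Rle_dec a b); lra.
  - intros x hx. apply continuous_const.
  - intros x hx. unfold g. apply Rinv_0_lt_compat, h. unfold Rmin, Rmax; destruct (Rle_dec a b); lra.
Qed.

Lemma T_mono y s a b : pos y s a -> pos y s b -> a < b -> T y s a < T y s b.
Proof.
  intros h1 h2 hab. assert (hp : pos y a b) by (apply (pos_trans _ _ s); auto; apply pos_sym; auto).
  rewrite <- (chasles y s a b h1 hp). pose proof (T_pos y a b hab hp). lra.
Qed.

Lemma T_inj y s a b : pos y s a -> pos y s b -> T y s a = T y s b -> a = b.
Proof.
  intros h1 h2 e. destruct (Rtotal_order a b) as [h|[h|h]]; auto.
  pose proof (T_mono y s a b h1 h2 h); lra. pose proof (T_mono y s b a h2 h1 h); lra.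
Qed.


Lemma myIVT (f : R -> R) a b v : a <= b -> (forall x, a <= x <= b -> continuity_pt f x) ->
  f a <= v <= f b -> exists x, a <= x <= b /\ f x = v.
Proof.
  intros hab hc hv.
  destruct (Req_dec (f a) v). exists a; split; auto; lra.
  destruct (Req_dec (f b) v). exists b; split; auto; lra.
  assert (a < b). { destruct hab; auto. subst. lra. }
  destruct (IVT_interv (fun x => f x - v) a b) as [z [hz e]]; auto.
  - intros x hx. apply continuity_pt_minus; auto. apply continuity_pt_const. intros u w; auto.
  - lra. - lra.
  - exists z; split; auto; lra.
Qed.

Lemma myIVTd (f : R -> R) a b v : a <= b -> (forall x, a <= x <= b -> continuity_pt f x) ->
  f b <= v <= f a -> exists x, a <= x <= b /\ f x = v.
Proof.
  intros hab hc hv.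
  destruct (myIVT (fun x => - f x) a b (- v)) as [x [hx e]]; auto.
  intros x hx; apply continuity_pt_opp; auto. lra.
  exists x; split; auto; lra.
Qed.

Lemma W_near_pos u y : 0 < W (u,y) -> exists del, 0 < del /\ forall v, Rabs (v - u) < del -> 0 < W (v,y).
Proof.
  intros h. destruct (Wc u y (W (u,y)) h) as [del [hd H]].
  exists del; split; auto. intros v hv.
  assert (Rabs (W (u,y) - W (v,y)) < W (u,y)). apply H. rewrite Rabs_minus_sym; auto. rewrite d_refl; auto.
  apply Rabs_def2 in H0. lra.
Qed.

Lemma T_deriv y a b : pos y a b -> derivable_pt_lim (T y a) b (g y b).
Proof.
  intros h. apply is_derive_Reals.
  assert (hb : 0 < W (b,y)). { apply h. unfold Rmin, Rmax; destruct (Rle_dec a b); lra. }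
  destruct (W_near_pos b y hb) as [del [hd H]].
  apply (is_derive_RInt (V:=R_NormedModule) (g y) (T y a) a b).
  - exists (mkposreal del hd). intros b0 hb0. unfold T. apply (RInt_correct (V:=R_CompleteNormedModule)).
    apply exT. apply (pos_trans _ _ b); auto. intros u hu.
    assert (Rabs (b0 - b) < del) by (apply hb0).
    apply H. unfold Rmin, Rmax in hu. apply Rabs_def1; destruct (Rle_dec b b0);
    apply Rabs_def2 in H0; lra.
  - apply gcontC; auto.
Qed.

Lemma T_cont y a b : pos y a b -> continuity_pt (T y a) b.
Proof.
  intros h. apply derivable_continuous_pt. exists (g y b). apply T_deriv; auto.
Qed.

Lemma T_IVT y s u1 u2 v : ok y s u1 -> ok y s u2 -> u1 <= u2 -> T y s u1 <= v <= T y s u2 ->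
  exists sg, u1 <= sg <= u2 /\ ok y s sg /\ T y s sg = v.
Proof.
  intros h1 h2 hu hv.
  assert (hok : forall x, u1 <= x <= u2 -> ok y s x).
  { intros x hx. apply (ok_trans _ _ u1); auto. apply (ok_btw _ _ u2).
    apply (ok_trans _ _ s); auto; apply ok_sym; auto.
    unfold Rmin, Rmax; destruct (Rle_dec u1 u2); lra. }
  destruct (myIVT (T y s) u1 u2 v) as [x [hx e]]; auto.
  intros x hx; apply T_cont, ok_pos, hok; auto.
  exists x; auto.
Qed.


Lemma UL1 y c e : c <= e -> pos y c e -> exists del m, 0 < del /\ 0 < m /\
  forall u y', c <= u <= e -> d y y' < del -> m <= W (u, y').
Proof.
  intros hce hp.
  apply (RI c e (fun x => exists del m, 0 < del /\ 0 < m /\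
     forall u y', c <= u <= x -> d y y' < del -> m <= W (u, y'))); auto.
  - intros z hz. exists 1, 1. repeat split; try lra. intros u y' hu; lra.
  - intros x hx. assert (hw : 0 < W (x,y)). { apply hp. unfold Rmin, Rmax; destruct (Rle_dec c e); lra. }
    destruct (Wc x y (W (x,y) / 2)) as [rho [hr H]]; [lra|].
    exists rho; split; auto. intros y0 hy0 [del [m [hd [hm Hm]]]] z hz.
    exists (Rmin del rho), (Rmin m (W (x,y) / 2)). repeat split.
    apply Rmin_glb_lt; auto. apply Rmin_glb_lt; lra.
    intros u y' hu hdy.
    assert (d y y' < del) by (eapply Rlt_le_trans; [apply hdy| apply Rmin_l]).
    assert (d y y' < rho) by (eapply Rlt_le_trans; [apply hdy| apply Rmin_r]).
    destruct (Rle_dec u y0).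
    + eapply Rle_trans. apply Rmin_l. apply Hm; auto; lra.
    + eapply Rle_trans. apply Rmin_r.
      assert (Rabs (W (x, y) - W (u, y')) < W (x, y) / 2). apply H; auto.
      apply Rabs_def1; lra.
      apply Rabs_def2 in H2. lra.
Qed.

Lemma UL2 y c e eta : c <= e -> 0 < eta -> exists del, 0 < del /\
  forall u y', c <= u <= e -> d y y' < del -> Rabs (W (u, y') - W (u, y)) < eta.
Proof.
  intros hce he.
  apply (RI c e (fun x => exists del, 0 < del /\
     forall u y', c <= u <= x -> d y y' < del -> Rabs (W (u, y') - W (u, y)) < eta)); auto.
  - intros z hz. exists 1. split; try lra. intros u y' hu; lra.
  - intros x hx.
    destruct (Wc x y (eta / 2)) as [rho [hr H]]; [lra|].
    exists rho; split; auto. intros y0 hy0 [del [hd Hm]] z hz.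
    exists (Rmin del rho). split.
    apply Rmin_glb_lt; auto.
    intros u y' hu hdy.
    assert (d y y' < del) by (eapply Rlt_le_trans; [apply hdy| apply Rmin_l]).
    assert (d y y' < rho) by (eapply Rlt_le_trans; [apply hdy| apply Rmin_r]).
    destruct (Rle_dec u y0).
    + apply Hm; auto; lra.
    + assert (Rabs (x - u) < rho) by (apply Rabs_def1; lra).
      assert (Rabs (W (x, y) - W (u, y')) < eta / 2) by (apply H; auto).
      assert (Rabs (W (x, y) - W (u, y)) < eta / 2) by (apply H; auto; rewrite d_refl; auto).
      apply Rabs_def2 in H3. apply Rabs_def2 in H4. apply Rabs_def1; lra.
Qed.

Lemma ginv_bound m A B eta : 0 < m -> m <= A -> m <= B -> Rabs (A - B) < eta ->
  Rabs (/ A - / B) <= eta / (m * m).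
Proof.
  intros hm hA hB h.
  replace (/ A - / B) with ((B - A) * / (A * B)) by (field; lra).
  rewrite Rabs_mult. rewrite (Rabs_right (/ (A*B))).
  2: { left. apply Rinv_0_lt_compat. nra. }
  unfold Rdiv. apply Rmult_le_compat. apply Rabs_pos. left; apply Rinv_0_lt_compat; nra.
  rewrite Rabs_minus_sym; lra.
  apply Rinv_le_contravar. nra. apply Rmult_le_compat; lra.
Qed.

Lemma PC y c e : c <= e -> pos y c e -> forall eps, 0 < eps -> exists del, 0 < del /\
  forall y', d y y' < del -> pos y' c e /\
   forall a b, c <= a <= e -> c <= b <= e -> Rabs (T y' a b - T y a b) < eps.
Proof.
  intros hce hp eps heps.
  destruct (UL1 y c e hce hp) as [d1 [m [hd1 [hm H1]]]].
  set (eta := eps * (m * m) / (e - c + 1)).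
  assert (heta : 0 < eta). { unfold eta. apply Rdiv_lt_0_compat. apply Rmult_lt_0_compat; [lra| apply Rmult_lt_0_compat; lra]. lra. }
  destruct (UL2 y c e eta hce heta) as [d2 [hd2 H2]].
  exists (Rmin d1 d2). split. apply Rmin_glb_lt; auto.
  intros y' hy'.
  assert (hy1 : d y y' < d1) by (eapply Rlt_le_trans; [apply hy'| apply Rmin_l]).
  assert (hy2 : d y y' < d2) by (eapply Rlt_le_trans; [apply hy'| apply Rmin_r]).
  assert (hpos' : pos y' c e).
  { intros u hu. unfold Rmin, Rmax in hu; destruct (Rle_dec c e); [|lra].
    apply Rlt_le_trans with m; auto. }
  split; auto.
  assert (key : forall a b, c <= a <= e -> c <= b <= e -> a <= b -> Rabs (T y' a b - T y a b) < eps).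
  { intros a b ha hb hab.
    assert (pa : pos y' a b) by (apply (pos_sub _ c e); unfold Rmin, Rmax; destruct (Rle_dec c e); auto; lra).
    assert (pb : pos y a b) by (apply (pos_sub _ c e); unfold Rmin, Rmax; destruct (Rle_dec c e); auto; lra).
    unfold T.
    assert (E : RInt (g y') a b - RInt (g y) a b = RInt (fun u => g y' u - g y u) a b).
    { pose proof (RInt_minus (V:=R_CompleteNormedModule) (g y') (g y) a b (exT _ _ _ pa) (exT _ _ _ pb)) as HH.
      exact (eq_sym HH). }
    rewrite E.
    eapply Rle_lt_trans.
    apply (abs_RInt_le_const _ a b (eta / (m * m))); auto.
    - apply (ex_RInt_minus (V:=R_NormedModule)); apply exT; auto.
    - intros t ht. unfold g. apply ginv_bound; auto. apply H1; auto; lra.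
      assert (d y y < d1) by (rewrite d_refl; auto). apply H1; auto; lra.
      apply H2; auto; lra.
    - unfold eta. replace ((b - a) * (eps * (m * m) / (e - c + 1) / (m * m))) with
        (eps * ((b - a) / (e - c + 1))) by (field; split; lra).
      assert ((b - a) / (e - c + 1) < 1). { apply (Rmult_lt_reg_r (e-c+1)); [lra|]. unfold Rdiv. rewrite Rmult_assoc, Rinv_l; lra. }
      assert (0 <= (b - a) / (e - c + 1)). { apply Rmult_le_pos; [lra| left; apply Rinv_0_lt_compat; lra]. }
      nra. }
  intros a b ha hb. destruct (Rle_dec a b). apply key; auto.
  assert (pa : pos y' b a) by (apply (pos_sub _ c e); unfold Rmin, Rmax; destruct (Rle_dec c e); auto; lra).
  assert (pb : pos y b a) by (apply (pos_sub _ c e); unfold Rmin, Rmax; destruct (Rle_dec c e); auto; lra).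
  rewrite (T_swap y' b a pa), (T_swap y b a pb).
  replace (- T y' b a - - T y b a) with (- (T y' b a - T y b a)) by ring. rewrite Rabs_Ropp.
  apply key; auto; lra.
Qed.


Definition p0 : R * S := (0, x0).

Lemma BOX y s sg : ok y s sg -> exists eta del0, 0 < eta /\ 0 < del0 /\
  forall y' a b, d y y' < del0 -> Rmin s sg - eta <= a <= Rmax s sg + eta ->
     Rmin s sg - eta <= b <= Rmax s sg + eta -> ok y' a b.
Proof.
  intros h. destruct (classic (y = x0)) as [e|ne].
  - subst y. destruct h as [h|[h|h]]. now destruct h.
    + exists (Rmin s sg / 2), 1. split. unfold Rmin in *; destruct (Rle_dec s sg); lra.
      split. lra. intros y' a b _ ha hb. right; left. unfold Rmin in *; destruct (Rle_dec s sg); lra.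
    + exists (- Rmax s sg / 2), 1. split. unfold Rmax in *; destruct (Rle_dec s sg); lra.
      split. lra. intros y' a b _ ha hb. right; right. unfold Rmax in *; destruct (Rle_dec s sg); lra.
  - exists 1, (d y x0). split. lra. split.
    destruct (d_pos y x0); auto. exfalso; apply ne, d_eq0; auto.
    intros y' a b hy _ _. left. intros e; subst. lra.
Qed.

Lemma cont_def (f : R -> R) x : continuity_pt f x -> forall eps, 0 < eps -> exists del, 0 < del /\
  forall x', Rabs (x' - x) < del -> Rabs (f x' - f x) < eps.
Proof.
  intros h eps he. destruct (h eps he) as [del [hd H]]. exists del; split; auto.
  intros x' hx. destruct (Req_dec x' x) as [->|ne].
  replace (f x - f x) with 0 by ring. rewrite Rabs_R0; auto.
  apply (H x'). split. split. constructor. auto. apply hx.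
Qed.

Lemma KEY y s sg : ok y s sg -> forall eps, 0 < eps -> exists del, 0 < del /\
  forall t' s' y', Rabs (t' - T y s sg) < del -> Rabs (s' - s) < del -> d y y' < del ->
   exists sg', Rabs (sg' - sg) < eps /\ ok y' s' sg' /\ T y' s' sg' = t'.
Proof.
  intros h eps heps.
  destruct (BOX y s sg h) as [eta [del0 [heta [hd0 HB]]]].
  set (c := Rmin s sg - eta). set (e := Rmax s sg + eta).
  assert (hs : forall z, Rabs (z - s) < eta -> c <= z <= e).
  { intros z hz. apply Rabs_def2 in hz. unfold c, e, Rmin, Rmax; destruct (Rle_dec s sg); lra. }
  assert (hsg : forall z, Rabs (z - sg) <= eta -> c <= z <= e).
  { intros z hz. destruct (proj1 (Rabs_le_between' _ _ _) hz). unfold c, e, Rmin, Rmax; destruct (Rle_dec s sg); lra. }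
  assert (hB : forall y' a b, d y y' < del0 -> c <= a <= e -> c <= b <= e -> ok y' a b) by (intros; apply HB; auto).
  assert (hyy : d y y < del0) by (rewrite d_refl; auto).
  assert (hce : c <= e) by (unfold c, e, Rmin, Rmax; destruct (Rle_dec s sg); lra).
  assert (hpce : pos y c e) by (apply ok_pos, hB; auto; lra).
  set (et := Rmin eta (eps / 2)).
  assert (het : 0 < et) by (apply Rmin_glb_lt; lra).
  assert (het1 : et <= eta) by apply Rmin_l.
  assert (het2 : et <= eps / 2) by apply Rmin_r.
  set (u1 := sg - et). set (u2 := sg + et).
  assert (hu1 : c <= u1 <= e) by (apply hsg; unfold u1; replace (sg - et - sg) with (- et) by ring; rewrite Rabs_Ropp, Rabs_right; lra).
  assert (hu2 : c <= u2 <= e) by (apply hsg; unfold u2; replace (sg + et - sg) with et by ring; rewrite Rabs_right; lra).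
  assert (hs0 : c <= s <= e) by (apply hs; replace (s - s) with 0 by ring; rewrite Rabs_R0; lra).
  assert (hsg0 : c <= sg <= e) by (apply hsg; replace (sg - sg) with 0 by ring; rewrite Rabs_R0; lra).
  assert (pP : forall a b, c <= a <= e -> c <= b <= e -> pos y a b) by (intros; apply ok_pos, hB; auto).
  set (m1 := T y sg u2). set (m2 := T y u1 sg).
  assert (hm1 : 0 < m1) by (apply T_pos; [unfold u2; lra| apply pP; auto]).
  assert (hm2 : 0 < m2) by (apply T_pos; [unfold u1; lra| apply pP; auto]).
  assert (E1 : T y s u2 = T y s sg + m1) by (unfold m1; rewrite chasles; auto).
  assert (E2 : T y s u1 = T y s sg - m2).
  { unfold m2. rewrite <- (chasles y s u1 sg); auto. ring. }
  set (mu := Rmin m1 m2 / 3).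
  assert (hmu : 0 < mu) by (unfold mu, Rmin; destruct (Rle_dec m1 m2); lra).
  assert (hmu1 : 3 * mu <= m1) by (unfold mu, Rmin; destruct (Rle_dec m1 m2); lra).
  assert (hmu2 : 3 * mu <= m2) by (unfold mu, Rmin; destruct (Rle_dec m1 m2); lra).
  destruct (PC y c e hce hpce mu hmu) as [del1 [hd1 H1]].
  destruct (cont_def _ _ (T_cont y s s (pP s s hs0 hs0)) mu hmu) as [del2 [hd2 H2]].
  rewrite T_aa in H2.
  set (del := Rmin (Rmin (Rmin del0 del1) (Rmin del2 mu)) eta).
  assert (hdel : 0 < del) by (unfold del; repeat apply Rmin_glb_lt; auto).
  assert (hdl0 : del <= del0) by (unfold del; repeat (eapply Rle_trans; [apply Rmin_l|]); lra).
  assert (hdl1 : del <= del1) by (unfold del; eapply Rle_trans; [apply Rmin_l|]; eapply Rle_trans; [apply Rmin_l|]; apply Rmin_r).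
  assert (hdl2 : del <= del2) by (unfold del; eapply Rle_trans; [apply Rmin_l|]; eapply Rle_trans; [apply Rmin_r|]; apply Rmin_l).
  assert (hdl3 : del <= mu) by (unfold del; eapply Rle_trans; [apply Rmin_l|]; eapply Rle_trans; [apply Rmin_r|]; apply Rmin_r).
  assert (hdl4 : del <= eta) by (unfold del; apply Rmin_r).
  exists del; split; auto.
  intros t' s' y' ht hs' hy'.
  assert (hs'r : c <= s' <= e) by (apply hs; lra).
  assert (hok1 : ok y' s' u1) by (apply hB; auto; lra).
  assert (hok2 : ok y' s' u2) by (apply hB; auto; lra).
  destruct (H1 y') as [_ H1']; [lra|].
  assert (A1 : Rabs (T y' s' u1 - T y s' u1) < mu) by (apply H1'; auto).
  assert (A2 : Rabs (T y' s' u2 - T y s' u2) < mu) by (apply H1'; auto).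
  assert (B0 : Rabs (T y s s' - 0) < mu) by (apply H2; lra).
  assert (C1 : T y s s' + T y s' u1 = T y s u1) by (apply chasles; auto).
  assert (C2 : T y s s' + T y s' u2 = T y s u2) by (apply chasles; auto).
  apply Rabs_def2 in A1. apply Rabs_def2 in A2. apply Rabs_def2 in B0. apply Rabs_def2 in ht.
  destruct (T_IVT y' s' u1 u2 t') as [sg' [hsg' [hok' hT']]]; auto.
  unfold u1, u2; lra. lra.
  exists sg'. split; auto. apply Rabs_def1; unfold u1, u2 in hsg'; lra.
Qed.

Lemma ok_self s y : (s, y) <> p0 -> ok y s s.
Proof.
  intros h. destruct (classic (y = x0)) as [->|ne]; [|left; auto].
  right. destruct (Rtotal_order s 0) as [h1|[h1|h1]]. right; lra. subst; now destruct h. left; lra.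
Qed.

Lemma T_nonneg y a b : a <= b -> pos y a b -> 0 <= T y a b.
Proof. intros [h|h] hp. left; apply T_pos; auto. subst; rewrite T_aa; lra. Qed.

Lemma ok_pos_all y a b : 0 < a -> 0 < b -> ok y a b.
Proof. intros; right; left; auto. Qed.
Lemma ok_neg_all y a b : a < 0 -> b < 0 -> ok y a b.
Proof. intros; right; right; auto. Qed.

Hypothesis Divr : forall M, exists a, 0 < a < 1 /\ M < T x0 a 1.
Hypothesis Divl : forall M, exists b, -1 < b < 0 /\ M < T x0 (-1) b.

Lemma divr_near M c : 0 < c -> c < 1 -> exists a, 0 < a < c /\ M < T x0 a c.
Proof.
  intros hc hc1. destruct (Divr (Rabs M + T x0 c 1)) as [a [ha hM]]. pose proof (Rle_abs M). pose proof (Rabs_pos M).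
  destruct (Rlt_dec a c) as [h|h].
  - exists a. split. lra. rewrite <- (chasles x0 a c 1) in hM. lra.
    apply ok_pos, ok_pos_all; lra. apply ok_pos, ok_pos_all; lra.
  - exfalso. rewrite <- (chasles x0 c a 1) in hM.
    assert (0 <= T x0 c a) by (apply T_nonneg; [lra| apply ok_pos, ok_pos_all; lra]). lra.
    apply ok_pos, ok_pos_all; lra. apply ok_pos, ok_pos_all; lra.
Qed.

Lemma divl_near M c : -1 < c -> c < 0 -> exists b, c < b < 0 /\ M < T x0 c b.
Proof.
  intros hc hc1. destruct (Divl (Rabs M + T x0 (-1) c)) as [b [hb hM]]. pose proof (Rle_abs M). pose proof (Rabs_pos M).
  destruct (Rlt_dec c b) as [h|h].
  - exists b. split. lra. rewrite <- (chasles x0 (-1) c b) in hM. lra.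
    apply ok_pos, ok_neg_all; lra. apply ok_pos, ok_neg_all; lra.
  - exfalso. rewrite <- (chasles x0 (-1) b c) in hM.
    assert (0 <= T x0 b c) by (apply T_nonneg; [lra| apply ok_pos, ok_neg_all; lra]). lra.
    apply ok_pos, ok_neg_all; lra. apply ok_pos, ok_neg_all; lra.
Qed.

Lemma FWD T0 eps : 0 < eps < 1 -> exists del, 0 < del /\ forall y' s',
  d x0 y' < del -> Rabs s' < del -> ok y' s' s' ->
  exists u2, s' <= u2 <= eps /\ ok y' s' u2 /\ T0 <= T y' s' u2.
Proof.
  intros he. destruct (divr_near (T0 + 1) eps) as [a [ha hT]]; try lra.
  assert (hpa : pos x0 a eps) by (apply ok_pos, ok_pos_all; lra).
  destruct (PC x0 a eps ltac:(lra) hpa (1/2) ltac:(lra)) as [d1 [hd1 H1]].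
  exists (Rmin d1 (Rmin a (1/2))). split. repeat apply Rmin_glb_lt; lra.
  intros y' s' hy hs hok.
  assert (hy1 : d x0 y' < d1) by (eapply Rlt_le_trans; [apply hy|apply Rmin_l]).
  assert (hs1 : Rabs s' < a) by (eapply Rlt_le_trans; [apply hs|]; eapply Rle_trans; [apply Rmin_r| apply Rmin_l]).
  assert (hs2 : Rabs s' < 1/2) by (eapply Rlt_le_trans; [apply hs|]; eapply Rle_trans; [apply Rmin_r| apply Rmin_r]).
  apply Rabs_def2 in hs1. apply Rabs_def2 in hs2.
  destruct (H1 y' hy1) as [hp' H1'].
  assert (A : Rabs (T y' a eps - T x0 a eps) < 1/2) by (apply H1'; lra).
  apply Rabs_def2 in A.
  destruct (classic (y' <> x0 \/ 0 < s')) as [c1|c1].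
  - assert (ok1 : ok y' s' a) by (destruct c1; [left; auto| apply ok_pos_all; lra]).
    assert (ok2 : ok y' s' eps) by (destruct c1; [left; auto| apply ok_pos_all; lra]).
    exists eps. split. lra. split; auto.
    rewrite <- (chasles y' s' a eps); auto. 2: apply ok_pos; auto.
    assert (0 <= T y' s' a) by (apply T_nonneg; [lra| apply ok_pos; auto]). lra.
  - assert (y' = x0) by (apply NNPP; intro; apply c1; left; auto). subst y'.
    assert (s' < 0). { destruct hok as [h|[h|h]]. now destruct h. exfalso; apply c1; right; lra. lra. }
    destruct (divl_near T0 s') as [b [hb hTb]]; try lra.
    exists b. split. lra. split. apply ok_neg_all; lra. lra.
Qed.

Lemma BWD T0 eps : 0 < eps < 1 -> exists del, 0 < del /\ forall y' s',
  d x0 y' < del -> Rabs s' < del -> ok y' s' s' ->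
  exists u1, - eps <= u1 <= s' /\ ok y' s' u1 /\ T y' s' u1 <= - T0.
Proof.
  intros he. destruct (divl_near (T0 + 1) (- eps)) as [b [hb hT]]; try lra.
  assert (hpb : pos x0 (-eps) b) by (apply ok_pos, ok_neg_all; lra).
  destruct (PC x0 (-eps) b ltac:(lra) hpb (1/2) ltac:(lra)) as [d1 [hd1 H1]].
  exists (Rmin d1 (Rmin (-b) (1/2))). split. repeat apply Rmin_glb_lt; lra.
  intros y' s' hy hs hok.
  assert (hy1 : d x0 y' < d1) by (eapply Rlt_le_trans; [apply hy|apply Rmin_l]).
  assert (hs1 : Rabs s' < -b) by (eapply Rlt_le_trans; [apply hs|]; eapply Rle_trans; [apply Rmin_r| apply Rmin_l]).
  assert (hs2 : Rabs s' < 1/2) by (eapply Rlt_le_trans; [apply hs|]; eapply Rle_trans; [apply Rmin_r| apply Rmin_r]).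
  apply Rabs_def2 in hs1. apply Rabs_def2 in hs2.
  destruct (H1 y' hy1) as [hp' H1'].
  assert (A : Rabs (T y' (-eps) b - T x0 (-eps) b) < 1/2) by (apply H1'; lra).
  apply Rabs_def2 in A.
  destruct (classic (y' <> x0 \/ s' < 0)) as [c1|c1].
  - assert (ok1 : ok y' s' b) by (destruct c1; [left; auto| apply ok_neg_all; lra]).
    assert (ok2 : ok y' s' (-eps)) by (destruct c1; [left; auto| apply ok_neg_all; lra]).
    assert (ok3 : ok y' b (-eps)) by (apply (ok_trans _ _ s'); auto; apply ok_sym; auto).
    exists (-eps). split. lra. split; auto.
    rewrite <- (chasles y' s' b (-eps)); try apply ok_pos; auto.
    rewrite (T_swap y' b s'), (T_swap y' (-eps) b); try (apply ok_pos; apply ok_sym); auto.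
    assert (0 <= T y' b s') by (apply T_nonneg; [lra| apply ok_pos, ok_sym; auto]). lra.
  - assert (y' = x0) by (apply NNPP; intro; apply c1; left; auto). subst y'.
    assert (0 < s'). { destruct hok as [h|[h|h]]. now destruct h. lra. exfalso; apply c1; right; lra. }
    destruct (divr_near T0 s') as [a [ha hTa]]; try lra.
    exists a. split. lra. split. apply ok_pos_all; lra.
    rewrite T_swap. lra. apply ok_pos, ok_pos_all; lra.
Qed.

Lemma KEY0 T0 eps : 0 < eps < 1 -> exists del, 0 < del /\ forall t' s' y',
  Rabs t' < T0 -> Rabs s' < del -> d x0 y' < del -> (s', y') <> p0 ->
  exists sg', Rabs sg' <= eps /\ ok y' s' sg' /\ T y' s' sg' = t'.
Proof.
  intros he. destruct (FWD T0 eps he) as [d1 [hd1 H1]]. destruct (BWD T0 eps he) as [d2 [hd2 H2]].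
  exists (Rmin d1 d2). split. apply Rmin_glb_lt; auto.
  intros t' s' y' ht hs hy hq.
  assert (hok := ok_self s' y' hq).
  destruct (H1 y' s') as [u2 [hu2 [ok2 hT2]]]; auto.
  eapply Rlt_le_trans; [apply hy|apply Rmin_l]. eapply Rlt_le_trans; [apply hs|apply Rmin_l].
  destruct (H2 y' s') as [u1 [hu1 [ok1 hT1]]]; auto.
  eapply Rlt_le_trans; [apply hy|apply Rmin_r]. eapply Rlt_le_trans; [apply hs|apply Rmin_r].
  apply Rabs_def2 in ht.
  destruct (T_IVT y' s' u1 u2 t') as [sg [hsg [oks hTs]]]; auto. lra. lra.
  exists sg. split; auto. apply Rabs_le; lra.
Qed.

Definition Gd (t : R) (q : R * S) : Prop :=
  q = p0 \/ exists sg, ok (snd q) (fst q) sg /\ T (snd q) (fst q) sg = t.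

Definition sf (t : R) (q : R * S) : R :=
  match excluded_middle_informative (exists sg, ok (snd q) (fst q) sg /\ T (snd q) (fst q) sg = t) with
  | left H => proj1_sig (constructive_indefinite_description _ H)
  | right _ => fst q
  end.

Definition phi (t : R) (q : R * S) : R * S := (sf t q, snd q).

Lemma sf_eq t s y sg : ok y s sg -> T y s sg = t -> sf t (s, y) = sg.
Proof.
  intros h1 h2. unfold sf. destruct (excluded_middle_informative _) as [H|H].
  - destruct (constructive_indefinite_description _ H) as [x [hx1 hx2]]. simpl in *.
    apply (T_inj y s); try apply ok_pos; auto. congruence.
  - exfalso; apply H; exists sg; auto.
Qed.

Lemma Gd_sf t s y : Gd t (s, y) -> (s, y) <> p0 -> ok y s (sf t (s, y)) /\ T y s (sf t (s, y)) = t.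
Proof.
  intros [h|[sg [h1 h2]]] hn. contradiction. simpl in *. rewrite (sf_eq t s y sg); auto.
Qed.

Lemma not_ok_p0 sg : ~ ok x0 0 sg.
Proof. intros [h|[h|h]]. now apply h. lra. lra. Qed.

Lemma phi_p0 t : phi t p0 = p0.
Proof.
  unfold phi, sf. destruct (excluded_middle_informative _) as [H|H].
  - exfalso. destruct H as [sg [h _]]. simpl in h. apply (not_ok_p0 sg h).
  - reflexivity.
Qed.

Lemma ok_not_p0 y s sg : ok y s sg -> (sg, y) <> p0.
Proof. intros h e. unfold p0 in e. injection e; intros; subst. apply (not_ok_p0 s). apply ok_sym; auto. Qed.

Lemma rmax_lt a b r : Rmax a b < r -> a < r /\ b < r.
Proof. intros h. split; eapply Rle_lt_trans; eauto. apply Rmax_l. apply Rmax_r. Qed.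

Lemma Gd_open : is_open (prod_dist absdist (Xdist d)) (fun u => Gd (fst u) (snd u)).
Proof.
  intros [t [s y]] hG. simpl in hG.
  destruct (classic ((s, y) = p0)) as [e|ne].
  - injection e; intros; subst.
    destruct (KEY0 (Rabs t + 1) (1/2)) as [del [hd H]]; [lra|].
    exists (Rmin del 1). split. apply Rmin_glb_lt; lra.
    intros [t' [s' y']] hv. unfold prod_dist, Xdist, absdist in hv. simpl in hv.
    apply rmax_lt in hv as [h1 h2]. apply rmax_lt in h2 as [h2 h3].
    assert (h1' : Rabs (t - t') < 1) by (eapply Rlt_le_trans; [apply h1|apply Rmin_r]).
    assert (h2' : Rabs (0 - s') < del) by (eapply Rlt_le_trans; [apply h2|apply Rmin_l]).
    assert (h3' : d x0 y' < del) by (eapply Rlt_le_trans; [apply h3|apply Rmin_l]).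
    simpl. destruct (classic ((s', y') = p0)) as [e'|ne']. left; auto.
    destruct (H t' s' y') as [sg [_ [ho hT]]]; auto.
    + apply Rabs_def2 in h1'. pose proof (Rle_abs t). pose proof (Rle_abs (-t)). rewrite Rabs_Ropp in H1.
      apply Rabs_def1; lra.
    + rewrite <- Rabs_Ropp. replace (- s') with (0 - s') by ring; auto.
    + right. exists sg; split; auto.
  - destruct (Gd_sf t s y hG ne) as [ho hT].
    destruct (KEY y s (sf t (s,y)) ho 1) as [del [hd H]]; [lra|].
    exists del. split; auto.
    intros [t' [s' y']] hv. unfold prod_dist, Xdist, absdist in hv. simpl in hv.
    apply rmax_lt in hv as [h1 h2]. apply rmax_lt in h2 as [h2 h3].
    destruct (H t' s' y') as [sg [_ [ho' hT']]]; auto.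
    rewrite hT, Rabs_minus_sym; auto. rewrite Rabs_minus_sym; auto.
    right. exists sg; split; auto.
Qed.

Lemma phi_cont : is_continuous_on (prod_dist absdist (Xdist d)) (Xdist d) (fun u => Gd (fst u) (snd u))
    (fun u => phi (fst u) (snd u)).
Proof.
  intros [t [s y]] hG eps he. simpl in hG.
  destruct (classic ((s, y) = p0)) as [e|ne].
  - injection e; intros; subst.
    destruct (KEY0 (Rabs t + 1) (Rmin (eps/2) (1/2))) as [del [hd H]].
    { split. apply Rmin_glb_lt; lra. eapply Rle_lt_trans. apply Rmin_r. lra. }
    exists (Rmin del (Rmin 1 eps)). split. repeat apply Rmin_glb_lt; lra.
    intros [t' [s' y']] _ hv. unfold prod_dist, Xdist, absdist in hv. simpl in hv.
    apply rmax_lt in hv as [h1 h2]. apply rmax_lt in h2 as [h2 h3].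
    assert (h1' : Rabs (t - t') < 1) by (eapply Rlt_le_trans; [apply h1|]; eapply Rle_trans; [apply Rmin_r|apply Rmin_l]).
    assert (h2' : Rabs (0 - s') < del) by (eapply Rlt_le_trans; [apply h2|apply Rmin_l]).
    assert (h3' : d x0 y' < del) by (eapply Rlt_le_trans; [apply h3|apply Rmin_l]).
    assert (h3'' : d x0 y' < eps) by (eapply Rlt_le_trans; [apply h3|]; eapply Rle_trans; [apply Rmin_r|apply Rmin_r]).
    simpl. change (0, x0) with p0. rewrite phi_p0.
    destruct (classic ((s', y') = p0)) as [e'|ne'].
    + rewrite e', phi_p0. unfold Xdist, prod_dist, absdist. simpl. replace (0 - 0) with 0 by ring. rewrite Rabs_R0, d_refl, Rmax_left; lra.
    + destruct (H t' s' y') as [sg [hsg [ho hT]]]; auto.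
      * apply Rabs_def2 in h1'. pose proof (Rle_abs t). pose proof (Rle_abs (-t)). rewrite Rabs_Ropp in H1.
        apply Rabs_def1; lra.
      * rewrite <- Rabs_Ropp. replace (- s') with (0 - s') by ring; auto.
      * unfold phi. rewrite (sf_eq t' s' y' sg); auto. unfold Xdist, prod_dist, absdist; simpl.
        apply Rmax_lub_lt; auto. rewrite Rminus_0_l, Rabs_Ropp. eapply Rle_lt_trans. apply hsg.
        eapply Rle_lt_trans. apply Rmin_l. lra.
  - destruct (Gd_sf t s y hG ne) as [ho hT].
    destruct (KEY y s (sf t (s,y)) ho eps he) as [del [hd H]].
    exists (Rmin del eps). split. apply Rmin_glb_lt; lra.
    intros [t' [s' y']] _ hv. unfold prod_dist, Xdist, absdist in hv. simpl in hv.
    apply rmax_lt in hv as [h1 h2]. apply rmax_lt in h2 as [h2 h3].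
    destruct (H t' s' y') as [sg [hsg [ho' hT']]].
    rewrite hT, Rabs_minus_sym; eapply Rlt_le_trans; [apply h1|apply Rmin_l].
    rewrite Rabs_minus_sym; eapply Rlt_le_trans; [apply h2|apply Rmin_l].
    eapply Rlt_le_trans; [apply h3|apply Rmin_l].
    simpl. unfold phi. rewrite (sf_eq t' s' y' sg); auto. unfold Xdist, prod_dist, absdist; simpl.
    apply Rmax_lub_lt. rewrite Rabs_minus_sym; auto. eapply Rlt_le_trans; [apply h3|apply Rmin_r].
Qed.

Lemma Gd_flow : partial_flow (Xdist d) Gd phi.
Proof.
  split; [apply Gd_open|]. split; [apply phi_cont|].
  split.
  { intros [s y]. destruct (classic ((s, y) = p0)) as [e|ne]. left; auto.
    right. exists s. simpl. split. apply ok_self; auto. apply T_aa. }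
  split.
  { intros [s0 y] t s hG hs. destruct (classic ((s0, y) = p0)) as [e|ne]. left; auto.
    destruct (Gd_sf t s0 y hG ne) as [ho hT]. set (sg := sf t (s0, y)) in *.
    right. simpl.
    destruct (Rle_dec s0 sg) as [h|h].
    - assert (0 <= t) by (rewrite <- hT; apply T_nonneg; auto; apply ok_pos; auto).
      destruct (T_IVT y s0 s0 sg s) as [x [_ [hx1 hx2]]]; auto. eapply ok_l; eauto.
      rewrite T_aa, hT. lra.
      exists x; auto.
    - assert (t < 0).
      { rewrite <- hT, T_swap. assert (0 < T y sg s0) by (apply T_pos; [lra| apply ok_pos, ok_sym; auto]). lra.
        apply ok_pos, ok_sym; auto. }
      destruct (T_IVT y s0 sg s0 s) as [x [_ [hx1 hx2]]]; auto. eapply ok_l; eauto. lra.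
      rewrite T_aa, hT. lra.
      exists x; auto. }
  split.
  { intros [s0 y] t hG s. destruct (classic ((s0, y) = p0)) as [e|ne].
    - rewrite e, phi_p0. split; intros; left; auto.
    - destruct (Gd_sf t s0 y hG ne) as [ho hT]. set (sg := sf t (s0, y)) in *.
      unfold phi. fold sg. simpl. split.
      + intros [e|[tau [h1 h2]]]. exfalso; apply (ok_not_p0 y s0 sg); auto.
        right. exists tau. simpl in *. split. apply (ok_trans _ _ sg); auto.
        rewrite <- (chasles y s0 sg tau); try apply ok_pos; auto. lra.
      + intros [e|[tau [h1 h2]]]. contradiction.
        right. exists tau. simpl in *.
        assert (ho2 : ok y sg tau) by (apply (ok_trans _ _ s0); auto; apply ok_sym; auto).
        split; auto. rewrite <- (chasles y s0 sg tau) in h2; try apply ok_pos; auto. lra. }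
  split.
  { intros [s y]. destruct (classic ((s, y) = p0)) as [e|ne].
    - rewrite e, phi_p0; auto.
    - unfold phi. simpl. rewrite (sf_eq 0 s y s); auto. apply ok_self; auto. apply T_aa. }
  { intros [s0 y] t s hG hG2. destruct (classic ((s0, y) = p0)) as [e|ne].
    - rewrite e, !phi_p0; auto.
    - destruct (Gd_sf t s0 y hG ne) as [ho hT]. set (sg := sf t (s0, y)) in *.
      change (phi t (s0,y)) with (sg, y) in *.
      assert (ne2 := ok_not_p0 y s0 sg ho).
      destruct (Gd_sf s sg y hG2 ne2) as [ho2 hT2].
      unfold phi. simpl. f_equal.
      symmetry. apply sf_eq. apply (ok_trans _ _ sg); auto.
      rewrite <- (chasles y s0 sg); try apply ok_pos; auto. lra. }
Qed.

Lemma INV (F f : R -> R) s L : 0 < L -> derivable_pt_lim F s L -> F s = 0 -> f 0 = s ->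
  (forall eps, 0 < eps -> exists del, 0 < del /\ forall t, Rabs t < del -> Rabs (f t - s) < eps /\ F (f t) = t) ->
  derivable_pt_lim f 0 (/ L).
Proof.
  intros hL hD hF0 hf0 hC eps he.
  set (e2 := Rmin (L/2) (eps * L * L / 8)).
  assert (he2 : 0 < e2) by (unfold e2; apply Rmin_glb_lt; [lra| apply Rmult_lt_0_compat; [apply Rmult_lt_0_compat; [apply Rmult_lt_0_compat|]; lra| lra]]).
  destruct (hD e2 he2) as [d2 Hd2].
  destruct (hC d2 (cond_pos d2)) as [del [hdel Hc]].
  exists (mkposreal del hdel). intros h hn hh. simpl in hh.
  destruct (Hc h hh) as [hk hFk].
  set (k := f h - s) in *.
  assert (hk0 : k <> 0). { intros e. assert (f h = s) by (unfold k in e; lra). rewrite H, hF0 in hFk. auto. }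
  assert (E := Hd2 k hk0 hk). replace (s + k) with (f h) in E by (unfold k; ring).
  rewrite hFk, hF0 in E. rewrite Rplus_0_l, hf0. fold k.
  set (r := (h - 0) / k) in *.
  assert (hr1 : Rabs (r - L) < L/2) by (eapply Rlt_le_trans; [apply E|apply Rmin_l]).
  assert (hr2 : Rabs (r - L) < eps * L * L / 8) by (eapply Rlt_le_trans; [apply E|apply Rmin_r]).
  apply Rabs_def2 in hr1.
  replace (k / h) with (/ r) by (unfold r; field; auto).
  eapply Rle_lt_trans. apply (ginv_bound (L/2) r L (eps * L * L / 8)); auto; lra.
  replace (eps * L * L / 8 / (L / 2 * (L / 2))) with (eps / 2) by (field; lra). lra.
Qed.

Lemma phi_deriv q : derivable_pt_lim (fun t => fst (phi t q)) 0 (W q).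
Proof.
  destruct (classic (q = p0)) as [e|ne].
  - subst. apply is_derive_Reals. unfold p0 at 2; rewrite HWp.
    apply (is_derive_ext (fun _ => 0)). intros t. rewrite phi_p0. reflexivity.
    apply (is_derive_const (V:=R_NormedModule)).
  - destruct q as [s y].
    assert (ho := ok_self s y ne).
    replace (W (s, y)) with (/ g y s) by (unfold g; rewrite Rinv_inv; auto).
    apply (INV (T y s) _ s).
    + unfold g. apply Rinv_0_lt_compat, HWpos; auto.
    + apply T_deriv, ok_pos; auto.
    + apply T_aa.
    + unfold phi; simpl. apply sf_eq; auto. apply T_aa.
    + intros eps he. destruct (KEY y s s ho eps he) as [del [hd H]].
      exists del; split; auto. intros t ht.
      destruct (H t s y) as [sg [h1 [h2 h3]]].
      rewrite T_aa, Rminus_0_r; auto. rewrite Rminus_diag, Rabs_R0; auto. rewrite d_refl; auto.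
      simpl. rewrite (sf_eq t s y sg); auto.
Qed.

Lemma prod_compact (K : S -> Prop) : is_compact d K ->
  is_compact (Xdist d) (fun q => -1 <= fst q <= 1 /\ K (snd q)).
Proof.
  intros hK I O hO hcov.
  set (tube := fun y (l : list I) r => 0 < r /\ forall s y', -1 <= s <= 1 -> d y y' < r -> exists i, In i l /\ O i (s, y')).
  assert (htube : forall y, K y -> exists l r, tube y l r).
  { intros y hy.
    apply (RI (-1) 1 (fun x => exists l r, 0 < r /\ forall s y', -1 <= s <= x -> d y y' < r -> exists i, In i l /\ O i (s, y'))).
    - lra.
    - intros z hz. exists nil, 1. split. lra. intros s y' hs. lra.
    - intros x hx. destruct (hcov (x, y)) as [i hi]. simpl; auto.
      destruct (hO i (x, y) hi) as [rho [hr Hr]].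
      exists rho. split; auto. intros y0 hy0 [l [r [hr0 Hl]]] z hz.
      exists (i :: l), (Rmin r rho). split. apply Rmin_glb_lt; auto.
      intros s y' hs hd'.
      assert (d y y' < r) by (eapply Rlt_le_trans; [apply hd'|apply Rmin_l]).
      assert (d y y' < rho) by (eapply Rlt_le_trans; [apply hd'|apply Rmin_r]).
      destruct (Rle_dec s y0).
      + destruct (Hl s y') as [j [hj1 hj2]]; auto. lra. exists j; split; auto. right; auto.
      + exists i. split. left; auto. apply Hr. unfold Xdist, prod_dist, absdist; simpl.
        apply Rmax_lub_lt; auto. apply Rabs_def1; lra. }
  set (O' := fun (j : S * list I * R) y' => K (fst (fst j)) /\ tube (fst (fst j)) (snd (fst j)) (snd j) /\ d (fst (fst j)) y' < snd j).
  destruct (hK (S * list I * R)%type O') as [L HL].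
  - intros [[y l] r] y' [hy [ht hd']]. simpl in *.
    exists (r - d y y'). split. lra. intros y'' hy''. unfold O'; simpl. split; auto. split; auto.
    pose proof (d_tri y y' y''). lra.
  - intros y hy. destruct (htube y hy) as [l [r ht]]. exists (y, l, r). unfold O'; simpl.
    split; auto. split; auto. rewrite d_refl. destruct ht; auto.
  - exists (flat_map (fun j => snd (fst j)) L).
    intros [s y'] [hs hy']. simpl in *.
    destruct (HL y' hy') as [[[y l] r] [hj [_ [[_ ht] hd']]]]. simpl in *.
    destruct (ht s y' hs hd') as [i [hi1 hi2]].
    exists i. split; auto. apply in_flat_map. exists (y, l, r). simpl; auto.
Qed.

Lemma Xdist_p0 a y : Rabs a <= Xdist d (a, y) p0 /\ d y x0 <= Xdist d (a, y) p0.
Proof.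
  unfold Xdist, prod_dist, absdist, p0; simpl. rewrite Rminus_0_r. split. apply Rmax_l. apply Rmax_r.
Qed.

Lemma Gd_isolated (K : S -> Prop) : is_compact d K -> is_nbhd d K x0 -> isolated_point (Xdist d) Gd phi p0.
Proof.
  intros hK [U [hU [hU0 hUK]]].
  exists (fun q => -1 <= fst q <= 1 /\ K (snd q)). split. apply prod_compact; auto.
  split.
  - exists (fun q => Rabs (fst q) < 1 /\ U (snd q)). split; [|split].
    + intros [s y] [hs hy]. simpl in *. destruct (hU y hy) as [r0 [hr0 Hr0]].
      exists (Rmin r0 (1 - Rabs s)). split. apply Rmin_glb_lt; lra.
      intros [s' y'] hv. unfold Xdist, prod_dist, absdist in hv; simpl in *.
      apply rmax_lt in hv as [h1 h2]. split.
      * assert (Rabs (s - s') < 1 - Rabs s) by (eapply Rlt_le_trans; [apply h1|apply Rmin_r]).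
        pose proof (Rabs_triang_inv s' s). rewrite Rabs_minus_sym in H. lra.
      * apply Hr0. eapply Rlt_le_trans; [apply h2|apply Rmin_l].
    + unfold p0; simpl. rewrite Rabs_R0. split; auto; lra.
    + intros [s y] [hs hy]; simpl in *. apply Rabs_def2 in hs. split. lra. auto.
  - intros [s y] H. apply NNPP. intros ne.
    set (sg := if excluded_middle_informative (y <> x0 \/ 0 < s) then 2 else -2).
    assert (ho : ok y s sg).
    { unfold sg. destruct (excluded_middle_informative _) as [h|h].
      destruct h. left; auto. apply ok_pos_all; lra.
      assert (y = x0) by (apply NNPP; intro; apply h; left; auto). subst.
      assert (ho := ok_self s x0 ne). destruct ho as [h'|[h'|h']]. now destruct h'. exfalso; apply h; right; lra.
      apply ok_neg_all; lra. }
    destruct (H (T y s sg)) as [h1 _]. right. exists sg; auto.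
    unfold phi in h1. simpl in h1. rewrite (sf_eq _ s y sg) in h1; auto.
    unfold sg in h1. destruct (excluded_middle_informative _); lra.
Qed.

Lemma Gd_fake (K : S -> Prop) : is_compact d K -> is_nbhd d K x0 -> fake_singularity (Xdist d) Gd phi p0.
Proof.
  intros hK hN. split. apply (Gd_isolated K); auto.
  assert (onx0 : forall s y T0, (forall t, T0 <= t -> Xdist d (phi t (s, y)) p0 < d y x0) -> y = x0).
  { intros s y T0 H. apply d_eq0. destruct (d_pos y x0) as [h|h]; auto. exfalso.
    specialize (H T0 (Rle_refl _)). unfold phi in H; simpl in H.
    destruct (Xdist_p0 (sf T0 (s, y)) y). lra. }
  assert (onx0' : forall s y T0, (forall t, t <= T0 -> Xdist d (phi t (s, y)) p0 < d y x0) -> y = x0).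
  { intros s y T0 H. apply d_eq0. destruct (d_pos y x0) as [h|h]; auto. exfalso.
    specialize (H T0 (Rle_refl _)). unfold phi in H; simpl in H.
    destruct (Xdist_p0 (sf T0 (s, y)) y). lra. }
  exists (-1, x0), (1, x0). split; [|split; [|split]].
  - intros e; injection e; lra.
  - intros e; injection e; lra.
  - intros [s y] ne [hG hT].
    assert (y = x0).
    { destruct (d_pos y x0) as [h|h]. destruct (hT _ h) as [T0 HT]. apply (onx0 s y T0); auto.
      apply d_eq0; auto. }
    subst y.
    assert (hs : s < 0).
    { destruct (ok_self s x0 ne) as [h|[h|h]]. now destruct h. 2: lra. exfalso.
      destruct (hT s) as [T0 HT]. lra.
      set (t := Rmax T0 0).
      assert (hG' := hG t (Rmax_r _ _)). destruct (Gd_sf t s x0 hG' ne) as [ho hTs].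
      assert (HH := HT t (Rmax_l _ _)). unfold phi in HH; simpl in HH.
      destruct (Xdist_p0 (sf t (s, x0)) x0) as [h1 _].
      set (sg := sf t (s, x0)) in *.
      assert (s <= sg).
      { destruct (Rle_dec s sg); auto. exfalso.
        assert (0 < T x0 sg s) by (apply T_pos; [lra| apply ok_pos, ok_sym; auto]).
        assert (hsw : T x0 s sg = - T x0 sg s) by (apply T_swap, ok_pos, ok_sym; auto).
        assert (0 <= t) by apply Rmax_r. lra. }
      assert (Rabs sg >= s) by (rewrite Rabs_right; lra). lra. }
    exists (T x0 (-1) s). split.
    + right. exists s. simpl. split; auto. apply ok_neg_all; lra.
    + unfold phi; simpl. rewrite (sf_eq _ (-1) x0 s); auto. apply ok_neg_all; lra.
  - intros [s y] ne [hG hT].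
    assert (y = x0).
    { destruct (d_pos y x0) as [h|h]. destruct (hT _ h) as [T0 HT]. apply (onx0' s y T0); auto.
      apply d_eq0; auto. }
    subst y.
    assert (hs : 0 < s).
    { destruct (ok_self s x0 ne) as [h|[h|h]]. now destruct h. lra. exfalso.
      destruct (hT (- s)) as [T0 HT]. lra.
      set (t := Rmin T0 0).
      assert (hG' := hG t (Rmin_r _ _)). destruct (Gd_sf t s x0 hG' ne) as [ho hTs].
      assert (HH := HT t (Rmin_l _ _)). unfold phi in HH; simpl in HH.
      destruct (Xdist_p0 (sf t (s, x0)) x0) as [h1 _].
      set (sg := sf t (s, x0)) in *.
      assert (sg <= s).
      { destruct (Rle_dec sg s); auto. exfalso.
        assert (0 < T x0 s sg) by (apply T_pos; [lra| apply ok_pos; auto]).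
        assert (t <= 0) by apply Rmin_r. lra. }
      assert (Rabs sg >= - s) by (rewrite Rabs_left; lra). lra. }
    exists (T x0 1 s). split.
    + right. exists s. simpl. split; auto. apply ok_pos_all; lra.
    + unfold phi; simpl. rewrite (sf_eq _ 1 x0 s); auto. apply ok_pos_all; lra.
Qed.

Lemma Gd_good (K : S -> Prop) : is_compact d K -> is_nbhd d K x0 -> good_flow d x0 W Gd phi.
Proof.
  intros hK hN. split. apply Gd_flow. split. intros t q _; reflexivity.
  split. apply (Gd_fake K); auto. apply phi_deriv.
Qed.

Section Uniq.
Variable G' : R -> R * S -> Prop.
Variable ph : R -> R * S -> R * S.
Hypothesis Hg : good_flow d x0 W G' ph.

Lemma Xdist_refl q : Xdist d q q = 0.
Proof. unfold Xdist, prod_dist, absdist. rewrite Rminus_diag, Rabs_R0, d_refl, Rmax_left; lra. Qed.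

Lemma U_open t q : G' t q -> exists rho, 0 < rho /\ forall t' q', Rabs (t - t') < rho -> Xdist d q q' < rho -> G' t' q'.
Proof.
  intros h. destruct Hg as [[Ho _] _]. destruct (Ho (t, q) h) as [rho [hr H]].
  exists rho; split; auto. intros t' q' h1 h2. apply (H (t', q')).
  unfold prod_dist, absdist; simpl. apply Rmax_lub_lt; auto.
Qed.

Lemma U0 q : G' 0 q.
Proof. destruct Hg as [[_ [_ [H _]]] _]. auto. Qed.

Lemma U_int t q s : G' t q -> (0 <= s <= t \/ t <= s <= 0) -> G' s q.
Proof. destruct Hg as [[_ [_ [_ [H _]]]] _]. apply H. Qed.

Lemma U_tr q t s : G' t q -> (G' s (ph t q) <-> G' (s + t) q).
Proof. destruct Hg as [[_ [_ [_ [_ [H _]]]]] _]. intros; apply H; auto. Qed.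

Lemma U_id q : ph 0 q = q.
Proof. destruct Hg as [[_ [_ [_ [_ [_ [H _]]]]]] _]. apply H. Qed.

Lemma U_comp q t s : G' t q -> G' s (ph t q) -> ph s (ph t q) = ph (s + t) q.
Proof. destruct Hg as [[_ [_ [_ [_ [_ [_ H]]]]]] _]. apply H. Qed.

Lemma U_hor t q : G' t q -> ph t q = (fst (ph t q), snd q).
Proof. destruct Hg as [_ [H _]]. intros h. rewrite <- (H t q h). destruct (ph t q); auto. Qed.

Lemma U_interval a b tau q : G' a q -> G' b q -> a <= tau <= b -> G' tau q.
Proof.
  intros ha hb h. destruct (Rle_dec 0 tau).
  apply (U_int b); auto; lra. apply (U_int a); auto; lra.
Qed.

Lemma U_deriv t q : G' t q -> derivable_pt_lim (fun tau => fst (ph tau q)) t (W (ph t q)).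
Proof.
  intros h. destruct Hg as [_ [_ [_ Hder]]].
  destruct (U_open t q h) as [rho [hr Hr]].
  intros eps he. destruct (Hder (ph t q) eps he) as [del Hdel].
  assert (hp : 0 < Rmin del rho) by (apply Rmin_glb_lt; auto; apply cond_pos).
  exists (mkposreal _ hp). intros hh hn hhh. simpl in hhh.
  assert (h1 : Rabs hh < del) by (eapply Rlt_le_trans; [apply hhh|apply Rmin_l]).
  assert (h2 : Rabs hh < rho) by (eapply Rlt_le_trans; [apply hhh|apply Rmin_r]).
  assert (hG : G' (t + hh) q) by (apply Hr; [replace (t - (t + hh)) with (- hh) by ring; rewrite Rabs_Ropp; auto| rewrite Xdist_refl; auto]).
  assert (hG2 : G' hh (ph t q)) by (apply U_tr; auto; rewrite Rplus_comm; auto).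
  assert (E : ph (t + hh) q = ph hh (ph t q)) by (rewrite U_comp; auto; f_equal; ring).
  specialize (Hdel hh hn h1). rewrite Rplus_0_l, U_id in Hdel. rewrite E. auto.
Qed.

Lemma U_cont t q : G' t q -> continuity_pt (fun tau => fst (ph tau q)) t.
Proof. intros h. apply derivable_continuous_pt. eexists. apply U_deriv; auto. Qed.

Lemma U_mono q t1 t2 : G' t1 q -> G' t2 q -> t1 <= t2 -> fst (ph t1 q) <= fst (ph t2 q).
Proof.
  intros h1 h2 [h|h]; [|subst; lra].
  destruct (MVT_cor2 (fun tau => fst (ph tau q)) (fun c => W (ph c q)) t1 t2 h) as [c [hc _]].
  intros c hc. apply U_deriv, (U_interval t1 t2); auto.
  pose proof (W_nonneg (ph c q)). nra.
Qed.

Lemma U_T q t0 t1 : t0 <= t1 -> G' t0 q -> G' t1 q ->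
  (forall tau, t0 <= tau <= t1 -> pos (snd q) (fst (ph t0 q)) (fst (ph tau q))) ->
  T (snd q) (fst (ph t0 q)) (fst (ph t1 q)) = t1 - t0.
Proof.
  intros [h|h] h0 h1 hp; [|subst; rewrite T_aa; ring].
  set (y := snd q). set (a := fst (ph t0 q)).
  set (F := (comp (T y a) (fun tau => fst (ph tau q)) - id)%F).
  destruct (MVT_cor2 F (fun _ => 0) t0 t1 h) as [c [hc _]].
  - intros c hc. assert (hG : G' c q) by (apply (U_interval t0 t1); auto).
    unfold F. replace 0 with (g y (fst (ph c q)) * W (ph c q) - 1).
    apply derivable_pt_lim_minus. apply derivable_pt_lim_comp. apply U_deriv; auto.
    apply T_deriv, hp; auto. apply derivable_pt_lim_id.
    assert (hw : W (ph c q) = W (fst (ph c q), y)) by (rewrite (U_hor c q hG) at 1; reflexivity).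
    rewrite hw. unfold g.
    assert (0 < W (fst (ph c q), y)). apply (hp c hc). split; [apply Rmin_r | apply Rmax_r].
    field. lra.
  - unfold F, minus_fct, comp, id in hc. unfold a in hc at 2. rewrite T_aa in hc. fold a y. lra.
Qed.

Lemma U_snd t q : G' t q -> snd (ph t q) = snd q.
Proof. destruct Hg as [_ [H _]]. apply H. Qed.

Lemma nat_big A : exists n : nat, A < INR n.
Proof.
  destruct (archimed_cor1 (/ (Rabs A + 1))) as [N [h1 h2]].
  apply Rinv_0_lt_compat. pose proof (Rabs_pos A); lra.
  exists N. destruct (Rle_dec (INR N) (Rabs A + 1)) as [h|h].
  - exfalso. assert (0 < INR N) by (apply lt_0_INR; auto).
    assert (/ (Rabs A + 1) <= / INR N) by (apply Rinv_le_contravar; auto). lra.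
  - pose proof (Rle_abs A). lra.
Qed.

Lemma U3a t : G' t p0 -> fst (ph t p0) = 0.
Proof.
  intros ht. set (sg := fun tau => fst (ph tau p0)).
  assert (s0 : sg 0 = 0) by (unfold sg; rewrite U_id; reflexivity).
  assert (hc : forall a b, G' a p0 -> G' b p0 -> a <= b -> forall x, a <= x <= b -> continuity_pt sg x).
  { intros a b ha hb hab x hx. apply U_cont. apply (U_interval a b); auto. }
  assert (hm : forall a b, G' a p0 -> G' b p0 -> a <= b -> sg a <= sg b) by (intros; apply U_mono; auto).
  assert (hG : forall a b x, G' a p0 -> G' b p0 -> a <= x <= b -> G' x p0) by (intros; apply (U_interval a b); auto).
  assert (hT : forall a b, a <= b -> G' a p0 -> G' b p0 -> (forall tau, a <= tau <= b -> pos x0 (sg a) (sg tau)) -> T x0 (sg a) (sg b) = b - a).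
  { intros a b hab ha hb hp. apply (U_T p0 a b); auto. }
  fold (sg t). destruct (Rtotal_order t 0) as [hn|[he|hp]].
  - assert (sg t <= 0) by (rewrite <- s0; apply hm; auto; [apply U0|lra]).
    destruct (Req_dec (sg t) 0) as [e|ne]; auto. exfalso.
    set (c' := Rmax (sg t) (-1/2)).
    assert (hc1 : -1 < c' < 0) by (unfold c', Rmax; destruct (Rle_dec (sg t) (-1/2)); lra).
    assert (hc2 : sg t <= c') by (apply Rmax_l).
    destruct (divl_near (-t) c') as [b [hb hTb]]; try lra.
    destruct (myIVT sg t 0 c') as [tc [htc etc]]; try lra. apply hc; auto. apply U0. lra.
    assert (G' tc p0) by (apply (hG t 0); auto; apply U0).
    destruct (myIVT sg tc 0 b) as [tb [htb etb]]; try lra. apply hc; auto. apply U0. lra.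
    assert (G' tb p0) by (apply (hG tc 0); auto; apply U0).
    assert (E := hT tc tb (proj1 htb) H0 H1).
    rewrite etc, etb in E.
    assert (T x0 c' b = tb - tc).
    { apply E. intros tau htau. apply ok_pos, ok_neg_all. lra.
      assert (G' tau p0) by (apply (hG tc tb); auto).
      assert (sg tau <= sg tb) by (apply hm; auto; lra). lra. }
    lra.
  - subst. unfold sg. rewrite U_id. reflexivity.
  - assert (0 <= sg t) by (rewrite <- s0; apply hm; auto; [apply U0|lra]).
    destruct (Req_dec (sg t) 0) as [e|ne]; auto. exfalso.
    set (c' := Rmin (sg t) (1/2)).
    assert (hc1 : 0 < c' < 1) by (unfold c', Rmin; destruct (Rle_dec (sg t) (1/2)); lra).
    assert (hc2 : c' <= sg t) by (apply Rmin_l).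
    destruct (divr_near t c') as [a [ha hTa]]; try lra.
    destruct (myIVT sg 0 t a) as [ta [hta eta]]; try lra. apply hc; auto. apply U0. lra.
    assert (G' ta p0) by (apply (hG 0 t); auto; apply U0).
    destruct (myIVT sg ta t c') as [tc [htc etc]]; try lra. apply hc; auto. lra.
    assert (G' tc p0) by (apply (hG ta t); auto).
    assert (E := hT ta tc (proj1 htc) H0 H1).
    rewrite eta, etc in E.
    assert (T x0 a c' = tc - ta).
    { apply E. intros tau htau. apply ok_pos, ok_pos_all. lra.
      assert (G' tau p0) by (apply (hG ta tc); auto).
      assert (sg ta <= sg tau) by (apply hm; auto; lra). lra. }
    lra.
Qed.

Lemma U_ph_p0 t : G' t p0 -> ph t p0 = p0.
Proof. intros h. rewrite (U_hor t p0 h), U3a; auto. Qed.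

Lemma U3b t : G' t p0.
Proof.
  destruct (U_open 0 p0 (U0 p0)) as [rho [hr Hr]].
  assert (step : forall tau h, G' tau p0 -> Rabs h < rho -> G' (h + tau) p0).
  { intros tau h ht hh. apply U_tr; auto. rewrite U_ph_p0; auto. apply Hr.
    rewrite Rminus_0_l, Rabs_Ropp; auto. rewrite Xdist_refl; auto. }
  assert (ind : forall n h, Rabs h <= INR n * (rho / 2) -> G' h p0).
  { induction n as [|n IH]; intros h hh.
    - simpl in hh. assert (h = 0). { pose proof (Rabs_pos h). apply Rabs_eq_0. lra. }
      subst; apply U0.
    - rewrite S_INR in hh.
      destruct (Rle_dec (rho/2) h).
      + replace h with (rho/2 + (h - rho/2)) by ring. apply step.
        apply IH. rewrite Rabs_right; try lra. rewrite Rabs_right in hh; lra.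
        rewrite Rabs_right; lra.
      + destruct (Rle_dec h (- (rho/2))).
        * replace h with (- (rho/2) + (h + rho/2)) by ring. apply step.
          apply IH. rewrite Rabs_left1; try lra. rewrite Rabs_left1 in hh; lra.
          rewrite Rabs_Ropp, Rabs_right; lra.
        * replace h with (h + 0) by ring. apply step. apply U0. apply Rabs_def1; lra. }
  destruct (nat_big (Rabs t / (rho / 2))) as [n hn].
  apply (ind n). apply Rlt_le.
  replace (Rabs t) with (Rabs t / (rho/2) * (rho/2)) by (field; lra).
  apply Rmult_lt_compat_r; lra.
Qed.

Lemma U_off q t : q <> p0 -> G' t q -> ph t q <> p0.
Proof.
  intros hq ht e. apply hq.
  assert (h1 : G' (-t) (ph t q)) by (rewrite e; apply U3b).
  assert (E := U_comp q t (-t) ht h1).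
  rewrite e, U_ph_p0 in E. 2: apply U3b.
  replace (-t + t) with 0 in E by ring. rewrite U_id in E. auto.
Qed.

Lemma U_ok s y tau : (s, y) <> p0 -> G' tau (s, y) -> ok y s (fst (ph tau (s, y))).
Proof.
  intros hq ht. set (sg := fun tau => fst (ph tau (s, y))). fold (sg tau).
  assert (s0 : sg 0 = s) by (unfold sg; rewrite U_id; reflexivity).
  destruct (classic (y = x0)) as [e|ne]; [|left; auto]. subst y.
  assert (hnz : sg tau <> 0).
  { intros e. apply (U_off _ tau hq ht). rewrite (U_hor tau _ ht). fold (sg tau). rewrite e. reflexivity. }
  assert (hzero : forall tau', G' tau' (s, x0) -> sg tau' <> 0).
  { intros tau' h e. apply (U_off _ tau' hq h). rewrite (U_hor tau' _ h). fold (sg tau'). rewrite e. reflexivity. }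
  assert (hG0 := U0 (s, x0)).
  destruct (ok_self s x0 hq) as [h|[h|h]]. now destruct h.
  - apply ok_pos_all; [lra|]. destruct (Rle_dec 0 tau).
    + assert (sg 0 <= sg tau) by (apply U_mono; auto). lra.
    + destruct (Rlt_dec 0 (sg tau)) as [h1|h1]; auto. exfalso.
      destruct (myIVT sg tau 0 0) as [x [hx ex]]; try lra.
      intros x hx. apply U_cont. apply (U_interval tau 0); auto.
      apply (hzero x); auto. apply (U_interval tau 0); auto.
  - apply ok_neg_all; [lra|]. destruct (Rle_dec tau 0).
    + assert (sg tau <= sg 0) by (apply U_mono; auto). lra.
    + destruct (Rlt_dec (sg tau) 0) as [h1|h1]; auto. exfalso.
      destruct (myIVT sg 0 tau 0) as [x [hx ex]]; try lra.
      intros x hx. apply U_cont. apply (U_interval 0 tau); auto; lra.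
      apply (hzero x); auto. apply (U_interval 0 tau); auto; lra.
Qed.

Lemma U5 q t : q <> p0 -> G' t q -> Gd t q /\ phi t q = ph t q.
Proof.
  intros hq ht. destruct q as [s y].
  set (sg := fun tau => fst (ph tau (s, y))).
  assert (s0 : sg 0 = s) by (unfold sg; rewrite U_id; reflexivity).
  assert (hG0 := U0 (s, y)).
  assert (hok : ok y s (sg t)) by (apply U_ok; auto).
  assert (hT : T y s (sg t) = t).
  { destruct (Rle_dec 0 t).
    - pose proof (U_T (s, y) 0 t r hG0 ht) as E. simpl in E. fold (sg 0) (sg t) in E. rewrite s0 in E.
      rewrite E. ring. intros tau htau. fold (sg tau). apply ok_pos, U_ok; auto.
      apply (U_interval 0 t); auto.
    - pose proof (U_T (s, y) t 0 ltac:(lra) ht hG0) as E. simpl in E. fold (sg 0) (sg t) in E. rewrite s0 in E.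
      assert (E' : T y (sg t) s = 0 - t).
      { apply E. intros tau htau. fold (sg tau). apply ok_pos. apply (ok_trans _ _ s). apply ok_sym; auto.
        apply U_ok; auto. apply (U_interval t 0); auto. }
      rewrite (T_swap y (sg t) s). lra. apply ok_pos, ok_sym; auto. }
  split. right. exists (sg t). simpl. auto.
  unfold phi. rewrite (U_hor t _ ht). simpl. f_equal. apply sf_eq; auto.
Qed.

Lemma Gd_int x t s : Gd t x -> (0 <= s <= t \/ t <= s <= 0) -> Gd s x.
Proof. destruct Gd_flow as [_ [_ [_ [H _]]]]. apply H. Qed.

Lemma U6e q e a : q <> p0 -> (e = 1 \/ e = -1) -> 0 <= a -> Gd (e * a) q -> G' (e * a) q.
Proof.
  intros hq he ha hGd. apply NNPP. intros hn.
  set (E := fun u => 0 <= u /\ G' (e * u) q).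
  assert (hb : forall u, E u -> u < a).
  { intros u [hu hG]. destruct (Rlt_dec u a) as [h|h]; auto. exfalso. apply hn.
    apply (U_int (e * u)); auto. destruct he; subst; [left|right]; lra. }
  assert (hE0 : E 0) by (split; [lra| rewrite Rmult_0_r; apply U0]).
  destruct (completeness E) as [m [hub hlub]].
  exists a. intros u hu. left; auto. exists 0; auto.
  assert (hm0 : 0 <= m) by (apply hub; auto).
  assert (hma : m <= a) by (apply hlub; intros u hu; left; auto).
  assert (hGb : Gd (e * m) q) by (apply (Gd_int q (e * a)); auto; destruct he; subst; [left|right]; lra).
  destruct (U_open 0 (phi (e * m) q) (U0 _)) as [rho [hr Hr]].
  destruct (phi_cont (e * m, q) hGb rho hr) as [del [hd Hc]].
  set (eps := Rmin del rho / 2).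
  assert (heps : 0 < eps) by (unfold eps, Rmin; destruct (Rle_dec del rho); lra).
  assert (he1 : eps < del) by (unfold eps, Rmin; destruct (Rle_dec del rho); lra).
  assert (he2 : eps <= rho / 2) by (unfold eps, Rmin; destruct (Rle_dec del rho); lra).
  destruct (classic (exists u, E u /\ m - eps < u)) as [[u [hu hu2]]|hno].
  2: { assert (m <= m - eps). { apply hlub. intros u hu. destruct (Rle_dec u (m - eps)); auto.
         exfalso; apply hno; exists u; split; auto; lra. } lra. }
  assert (hum : u <= m) by (apply hub; auto).
  destruct hu as [hu0 hGu].
  destruct (U5 q (e * u) hq hGu) as [hGdu hphu].
  assert (habs : forall x, Rabs (e * x) = Rabs x) by (intros; rewrite Rabs_mult; destruct he; subst;
    [rewrite Rabs_R1| rewrite (Rabs_left (-1)) by lra]; ring).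
  assert (hX : Xdist d (phi (e * m) q) (ph (e * u) q) < rho).
  { rewrite <- hphu. apply (Hc (e * u, q)); auto. unfold prod_dist, absdist; simpl.
    rewrite Xdist_refl. apply Rmax_lub_lt; [|lra].
    replace (e * m - e * u) with (e * (m - u)) by ring. rewrite habs, Rabs_right; lra. }
  assert (hG2 : G' (e * (rho / 2)) (ph (e * u) q)).
  { apply Hr; auto. rewrite Rminus_0_l, Rabs_Ropp, habs, Rabs_right; lra. }
  apply U_tr in hG2; auto.
  replace (e * (rho / 2) + e * u) with (e * (rho / 2 + u)) in hG2 by ring.
  assert (rho / 2 + u <= m) by (apply hub; split; auto; lra). lra.
Qed.

Lemma U6 q t : q <> p0 -> Gd t q -> G' t q.
Proof.
  intros hq h. destruct (Rle_dec 0 t) as [r|r].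
  - assert (G' (1*t) q) by (apply U6e; auto; rewrite Rmult_1_l; auto). rewrite Rmult_1_l in H; auto.
  - assert (G' (-1 * (-t)) q) by (apply U6e; auto; [lra| replace (-1 * - t) with t by ring; auto]).
    replace (-1 * - t) with t in H by ring; auto.
Qed.

Lemma uniq : (forall t q, Gd t q <-> G' t q) /\ (forall t q, Gd t q -> phi t q = ph t q).
Proof.
  split.
  - intros t q. destruct (classic (q = p0)) as [e|ne].
    + subst. split; intros; [apply U3b| left; auto].
    + split; intros h. apply U6; auto. apply U5; auto.
  - intros t q h. destruct (classic (q = p0)) as [e|ne].
    + subst. rewrite phi_p0, U_ph_p0; auto. apply U3b.
    + apply U5; auto. apply U6; auto.
Qed.
End Uniq. End Flow.

Theorem mainTheorem12 (S : Type) (d : S -> S -> R) (x0 : S) (W : R * S -> R)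
  (Hd : is_metric d)
  (Hx0 : exists K, is_compact d K /\ is_nbhd d K x0)
  (HW : is_continuous_on (Xdist d) absdist (fun _ => True) W)
  (HWp : W (0, x0) = 0)
  (HWpos : forall q, q <> (0, x0) -> 0 < W q)
  (Hint_l : forall M, exists b, -1 < b < 0 /\
     exists pr : Riemann_integrable (fun s => / W (s, x0)) (-1) b, M < RiemannInt pr)
  (Hint_r : forall M, exists a, 0 < a < 1 /\
     exists pr : Riemann_integrable (fun s => / W (s, x0)) a 1, M < RiemannInt pr) :
  exists (G : R -> R * S -> Prop) (phi : R -> R * S -> R * S),
    good_flow d x0 W G phi /\
    forall (G' : R -> R * S -> Prop) (phi' : R -> R * S -> R * S),
      good_flow d x0 W G' phi' ->
      (forall t q, G t q <-> G' t q) /\ (forall t q, G t q -> phi t q = phi' t q).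
Proof.
  assert (Divr : forall M, exists a, 0 < a < 1 /\ M < T S W x0 a 1).
  { intros M. destruct (Hint_r M) as [a [ha [pr hpr]]]. exists a. split; auto.
    unfold T, g. rewrite (RInt_Reals _ _ _ pr). auto. }
  assert (Divl : forall M, exists b, -1 < b < 0 /\ M < T S W x0 (-1) b).
  { intros M. destruct (Hint_l M) as [b [hb [pr hpr]]]. exists b. split; auto.
    unfold T, g. rewrite (RInt_Reals _ _ _ pr). auto. }
  destruct Hx0 as [K [hK hN]].
  exists (Gd S x0 W), (phi S x0 W). split.
  - apply (Gd_good S d x0 W Hd HW HWp HWpos Divr Divl K hK hN).
  - intros G' phi' Hg. apply (uniq S d x0 W Hd HW HWp HWpos Divr Divl G' phi' Hg).
Qed.
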